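(* Let $\Sigma$ be a finite set, $I\subseteq\Sigma\times\Sigma$ a symmetric irreflexive relation, $M=M(\Sigma,I)$, and $n\ge 1$. If the graph $\Gamma(M)$ contains no complete subgraph with more than $n$ vertices (equivalently, there are no $n+1$ distinct pairwise commuting letters in $\Sigma$), then the homological dimension of $M$ is at most $n$, i.e. the trivial module $\mathbb{Z}$ has a projective (indeed free) resolution over $\mathbb{Z}M$ of length at most $n$.
   Context: For a finite alphabet $\Sigma$ and a symmetric irreflexive relation $I\subseteq \Sigma\times\Sigma$, the free partially commutative monoid $M(\Sigma,I)$ is the monoid with presentation $\langle \Sigma \mid ab=ba \text{ for all } (a,b)\in I\rangle$. Its graph $\Gamma(M)$ is the simple undirected graph with vertex set $\Sigma$ in which $a,b$ are adjacent iff $(a,b)\in I$. The homological dimension of a monoid $M$ is the projective dimension of the trivial $\mathbb{Z}M$-module $\mathbb{Z}$ (with $n\cdot m=n$ for $m\in M$). *)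

(* Defs.v *)
From HB Require Import structures.
From mathcomp Require Import all_boot all_order all_algebra.
Set Implicit Arguments. Unset Strict Implicit. Unset Printing Implicit Defensive.
Import GRing.Theory.
Local Open Scope ring_scope.

(* The free partially commutative monoid M(Sigma, I) = seq Sigma / trace_eq I:
   the congruence generated by  a b = b a  for (a,b) in I. *)
Inductive trace_eq (S : Type) (I : rel S) : seq S -> seq S -> Prop :=
| te_refl u : trace_eq I u u
| te_sym u v : trace_eq I u v -> trace_eq I v u
| te_trans u v w : trace_eq I u v -> trace_eq I v w -> trace_eq I u w
| te_swap u v a b : I a b ->
    trace_eq I (u ++ a :: b :: v) (u ++ b :: a :: v).

(* A (left) ZM-module structure on an abelian group V: an action of the monoid
   M = M(S,I) (given on representative words, compatible with trace_eq) by
   additive endomorphisms.  This is exactly a module over the monoid ring ZM. *)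
Definition is_module (S : Type) (I : rel S) (V : zmodType)
  (act : seq S -> V -> V) : Prop :=
  [/\ forall w (x y : V), act w (x - y) = act w x - act w y,
      forall x, act [::] x = x,
      forall u v x, act (u ++ v) x = act u (act v x)
    & forall u v x, trace_eq I u v -> act u x = act v x].

Definition is_hom (S : Type) (V W : zmodType)
  (actV : seq S -> V -> V) (actW : seq S -> W -> W) (f : V -> W) : Prop :=
  (forall x y, f (x - y) = f x - f y) /\ (forall w x, f (actV w x) = actW w (f x)).

Definition triv_act (S : Type) (w : seq S) (x : int) : int := x.

Definition projective (S : Type) (I : rel S) (P : zmodType)
  (actP : seq S -> P -> P) : Prop :=
  forall (A B : zmodType) (actA : seq S -> A -> A) (actB : seq S -> B -> B)
         (g : A -> B) (f : P -> B),
    is_module I actA -> is_module I actB ->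
    is_hom actA actB g -> (forall b, exists a, g a = b) ->
    is_hom actP actB f ->
    exists h : P -> A, is_hom actP actA h /\ (forall x, g (h x) = f x).

(* Homological dimension of M(S,I) is at most n: the trivial module Z has a
   projective resolution  0 -> P_n -> ... -> P_1 -> P_0 -> Z -> 0
   (d i : P_(i+1) -> P_i, eps : P_0 -> Z). *)
Definition hom_dim_le (S : Type) (I : rel S) (n : nat) : Prop :=
  exists (P : nat -> zmodType) (act : forall i, seq S -> P i -> P i)
         (d : forall i, P i.+1 -> P i) (eps : P 0%N -> int),
    [/\ (forall i, (i <= n)%N -> is_module I (act i) /\ projective I (act i)),
        (forall i, (i < n)%N -> is_hom (act i.+1) (act i) (d i)),
        (is_hom (act 0%N) (@triv_act S) eps /\ (forall z, exists x, eps x = z)),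
        (((0 < n)%N -> forall x, eps x = 0 <-> exists y, d 0%N y = x) /\
         (forall i, (i.+1 < n)%N -> forall x : P i.+1,
            d i x = 0 <-> exists y, d i.+1 y = x))
      & ((forall x : P 0%N, n = 0%N -> eps x = 0 -> x = 0) /\
         (forall i, i.+1 = n -> forall x : P i.+1, d i x = 0 -> x = 0))].

(* Main.v *)
Require Import Defs.
From HB Require Import structures.
From mathcomp Require Import all_boot all_order all_algebra.
From Stdlib Require Import Classical ClassicalEpsilon.
From mathcomp Require Import freeg zify.
Import GRing.Theory.
Set Implicit Arguments. Unset Strict Implicit. Unset Printing Implicit Defensive.

Section Traces.
Variable S : finType.
Variable I : rel S.
Hypothesis Isym : symmetric I.
Hypothesis Iirr : irreflexive I.

Definition proj (x y : S) (u : seq S) := [seq c <- u | (c == x) || (c == y)].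
Definition teqb (u v : seq S) : bool :=
  [forall x, forall y, ~~ I x y ==> (proj x y u == proj x y v)].

Lemma teqbP u v : (forall x y, ~~ I x y -> proj x y u = proj x y v) -> teqb u v.
Proof. move=> H; apply/forallP=> x; apply/forallP=> y; apply/implyP=> /H ->; by []. Qed.

Lemma teqbE u v : teqb u v -> forall x y, ~~ I x y -> proj x y u = proj x y v.
Proof. by move=> /forallP H x y nI; have /forallP/(_ y)/implyP/(_ nI)/eqP := H x. Qed.

Lemma teqb_refl u : teqb u u.
Proof. by apply: teqbP. Qed.
Lemma teqb_sym u v : teqb u v -> teqb v u.
Proof. by move=> H; apply: teqbP => x y nI; rewrite (teqbE H). Qed.
Lemma teqb_trans u v w : teqb u v -> teqb v w -> teqb u w.
Proof. by move=> H1 H2; apply: teqbP => x y nI; rewrite (teqbE H1) ?(teqbE H2). Qed.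
Lemma teqb_cat u u' v v' : teqb u u' -> teqb v v' -> teqb (u ++ v) (u' ++ v').
Proof.
by move=> H1 H2; apply: teqbP => x y nI; rewrite /proj !filter_cat -!/(proj _ _ _) (teqbE H1) ?(teqbE H2).
Qed.

Lemma trace_teqb u v : trace_eq I u v -> teqb u v.
Proof.
elim=> {u v} [u|u v _|u v w _ H1 _ H2|u v a b Iab].
- exact: teqb_refl.
- exact: teqb_sym.
- exact: teqb_trans H1 H2.
apply: teqbP => x y nI; rewrite /proj !filter_cat /=.
case: (boolP ((a == x) || (a == y))) => ha; case: (boolP ((b == x) || (b == y))) => hb //.
exfalso; move: nI; case/orP: ha => /eqP ?; case/orP: hb => /eqP ?; subst.
- by rewrite Iirr in Iab.
- by rewrite Iab.
- by rewrite Isym Iab.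
- by rewrite Iirr in Iab.
Qed.

Lemma trace_cat_l p u v : trace_eq I u v -> trace_eq I (p ++ u) (p ++ v).
Proof.
elim=> {u v} [u|u v _ H|u v w _ H1 _ H2|u v a b Iab].
- exact: te_refl.
- exact: te_sym.
- exact: te_trans H1 H2.
by rewrite !catA; apply: te_swap.
Qed.

Lemma trace_move a v1 v2 : all (I a) v1 -> trace_eq I (v1 ++ a :: v2) (a :: v1 ++ v2).
Proof.
elim: v1 => [|c v1 IH] /=; first by move=> _; apply: te_refl.
case/andP=> Iac /IH H.
apply: te_trans (trace_cat_l [:: c] H) _.
by apply: (@te_swap _ _ [::] (v1 ++ v2)); rewrite Isym.
Qed.

Lemma proj_cons x y a u : proj x y (a :: u) =
  if (a == x) || (a == y) then a :: proj x y u else proj x y u.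
Proof. by []. Qed.

Lemma teqb_cons_inj a u v : teqb (a :: u) (a :: v) -> teqb u v.
Proof.
move=> H; apply: teqbP => x y nI; have := teqbE H nI; rewrite !proj_cons.
by case: ifP => // _ [].
Qed.

Lemma teqb_trace u v : teqb u v -> trace_eq I u v.
Proof.
elim: u v => [|a u IH] v H.
  have: forall x, x \notin v.
    move=> x; apply/negP=> xv; have := teqbE H (x:=x) (y:=x); rewrite Iirr /proj /=.
    move/(_ isT)/esym => E.
    have : x \in [seq c <- v | (c == x) || (c == x)] by rewrite mem_filter eqxx xv.
    by rewrite E.
  case: v {H} => [|b w]; first by move=> _; apply: te_refl.
  by move/(_ b); rewrite inE eqxx.
have av : a \in v.
  have := teqbE H (x:=a) (y:=a); rewrite Iirr /proj /= eqxx /= => /(_ isT) /esym.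
  move=> E; have : a \in [seq c <- v | (c == a) || (c == a)] by rewrite E inE eqxx.
  by rewrite mem_filter => /andP[].
set i := index a v; set v1 := take i v; set v2 := drop i.+1 v.
have Ev : v = v1 ++ a :: v2 by rewrite /v1 /v2 -drop_index // cat_take_drop.
have av1 : a \notin v1 by rewrite /v1 in_take // ltnn.
have Iv1 : all (I a) v1.
  apply/allP=> c cv1; apply/negPn/negP=> nI.
  have ca : c != a by apply: contraNneq av1 => <-.
  have := teqbE H nI; rewrite Ev /proj filter_cat /= eqxx /=.
  case E1 : [seq c0 <- v1 | (c0 == a) || (c0 == c)] => [|d s].
    have : c \in [seq c0 <- v1 | (c0 == a) || (c0 == c)] by rewrite mem_filter eqxx orbT.
    by rewrite E1.
  move=> [] ad; have : d \in [seq c0 <- v1 | (c0 == a) || (c0 == c)] by rewrite E1 inE eqxx.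
  by rewrite mem_filter -ad (negPf av1) andbF.
have Htr := trace_move v2 Iv1.
have H2 : teqb (a :: u) (a :: v1 ++ v2).
  by apply: teqb_trans H _; rewrite Ev; apply: trace_teqb.
have := IH _ (teqb_cons_inj H2) => /(trace_cat_l [:: a]) /= H3.
by rewrite Ev; apply: te_trans H3 (te_sym Htr).
Qed.


Lemma teqb_count u v : teqb u v -> forall x, count_mem x u = count_mem x v.
Proof.
move=> H x; have := teqbE H (x:=x) (y:=x); rewrite Iirr => /(_ isT) E.
have E2 : forall w, proj x x w = [seq c <- w | c == x].
  by move=> w; apply: eq_filter => c; rewrite orbb.
by rewrite -!size_filter -!E2 E.
Qed.

Lemma teqb_perm u v : teqb u v -> perm_eq u v.
Proof. by move=> H; apply/allP=> x _ /=; rewrite (teqb_count H). Qed.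

Lemma teqb_size u v : teqb u v -> size u = size v.
Proof. by move/teqb_perm/perm_size. Qed.

Lemma teqb_rcons_inj a u v : teqb (rcons u a) (rcons v a) -> teqb u v.
Proof.
move=> H; apply: teqbP => x y nI; have := teqbE H nI; rewrite /proj !filter_rcons.
by case: ifP => // _ /rcons_inj [].
Qed.

Lemma teqb_rcons u v a : teqb u v -> teqb (rcons u a) (rcons v a).
Proof. by move=> H; rewrite -!cats1; apply: teqb_cat H (teqb_refl _). Qed.

Lemma teqb_catl p u v : teqb u v -> teqb (p ++ u) (p ++ v).
Proof. by move=> H; apply: teqb_cat (teqb_refl _) H. Qed.

Lemma teqb_catr p u v : teqb u v -> teqb (u ++ p) (v ++ p).
Proof. by move=> H; apply: teqb_cat H (teqb_refl _). Qed.

Definition nf (u : seq S) : seq S := xchoose (ex_intro (teqb u) u (teqb_refl u)).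

Lemma nfE u : teqb u (nf u).
Proof. exact: xchooseP. Qed.

Lemma nf_eq u v : teqb u v -> nf u = nf v.
Proof.
move=> H; apply: eq_xchoose => w; apply/idP/idP => H2.
- exact: teqb_trans (teqb_sym H) H2.
- exact: teqb_trans H H2.
Qed.

Lemma nf_idem u : nf (nf u) = nf u.
Proof. by apply/esym/nf_eq/nfE. Qed.

Lemma size_nf u : size (nf u) = size u.
Proof. by rewrite (teqb_size (nfE u)). Qed.

Lemma nf_teqb u v : nf u = nf v -> teqb u v.
Proof. by move=> E; apply: teqb_trans (nfE u) _; rewrite E; apply: teqb_sym (nfE v). Qed.

Definition cliq (s : seq S) := forall p q, p \in s -> q \in s -> p != q -> I p q.

Lemma uniq_small_eq (s s' : seq S) : uniq s -> uniq s' -> s =i s' -> size s <= 1 -> s = s'.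
Proof.
move=> us us' E sz; have sz' := perm_size (uniq_perm us us' E).
case: s sz E sz' {us} => [|p [|q s]] //= _ E.
- by case: s' {us' E}.
- case: s' {us'} E => [|b [|c s']] //= E _.
  by have := E p; rewrite !inE eqxx => /esym/eqP ->.
Qed.

Lemma cliq_teqb (s1 s2 : seq S) : uniq s1 -> uniq s2 -> s1 =i s2 -> cliq s1 -> teqb s1 s2.
Proof.
move=> u1 u2 E C; apply: teqbP => x y nI; apply: uniq_small_eq.
- exact: filter_uniq.
- exact: filter_uniq.
- by move=> c; rewrite !mem_filter E.
case E1 : (proj x y s1) => [|p [|q w]] //.
have : uniq (proj x y s1) by apply: filter_uniq.
rewrite E1 /= inE => /andP[pq _].
have : p \in proj x y s1 by rewrite E1 inE eqxx.
have : q \in proj x y s1 by rewrite E1 !inE eqxx orbT.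
rewrite /proj !mem_filter => /andP[hq qs] /andP[hp ps].
have {}pq : p != q by move: pq; apply: contra => /eqP ->; rewrite eqxx.
have Ipq := C _ _ ps qs pq; exfalso; move: nI.
case/orP: hp => /eqP ?; case/orP: hq => /eqP ?; subst => //.
- by rewrite eqxx in pq.
- by rewrite Ipq.
- by rewrite Isym Ipq.
- by rewrite eqxx in pq.
Qed.

Definition asb (P : Prop) : bool := if excluded_middle_informative P then true else false.
Lemma asbP (P : Prop) : reflect P (asb P).
Proof. by rewrite /asb; case: excluded_middle_informative => H; constructor. Qed.

Definition lastb (u : seq S) (a : S) : bool := asb (exists t, teqb u (rcons t a)).

Lemma lastbP u a : reflect (exists t, teqb u (rcons t a)) (lastb u a).
Proof. exact: asbP. Qed.

Lemma proj_rcons x y t a : proj x y (rcons t a) =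
  if (a == x) || (a == y) then rcons (proj x y t) a else proj x y t.
Proof. by rewrite /proj filter_rcons. Qed.

Lemma last_comm u a b : lastb u a -> lastb u b -> a != b -> I a b.
Proof.
move=> /lastbP[t1 H1] /lastbP[t2 H2] ab; apply/negPn/negP=> nI.
have := teqbE (teqb_trans (teqb_sym H1) H2) nI.
rewrite !proj_rcons !eqxx orbT /= => /(congr1 (last a)); rewrite !last_rcons => /eqP.
by rewrite (negPf ab).
Qed.

Lemma lastb_teqb u v a : teqb u v -> lastb u a -> lastb v a.
Proof.
move=> H /lastbP[t Ht]; apply/lastbP; exists t; exact: teqb_trans (teqb_sym H) Ht.
Qed.

Lemma lastb_rcons t a : lastb (rcons t a) a.
Proof. by apply/lastbP; exists t; apply: teqb_refl. Qed.

Lemma last_all (x : S) q : all (pred1 x) q -> last x q = x.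
Proof. by elim: q => //= c q IH /andP[/eqP -> ]. Qed.

Lemma last_cat_lemma t s r m : teqb (t ++ s) (rcons r m) -> m \notin s ->
  exists t', teqb t (rcons t' m).
Proof.
elim/last_ind: t s r => [|t0 x IH] s r H ms.
  have := teqb_count H m; rewrite /= -cats1 count_cat /= eqxx (count_memPn ms).
  by rewrite addn1.
have [xm|xm] := eqVneq x m; first by subst; exists t0; apply: teqb_refl.
have Ixm : I x m.
  apply/negPn/negP=> nI; have := teqbE H nI.
  rewrite proj_rcons eqxx orbT /proj filter_cat filter_rcons eqxx /= -/(proj _ _ _).
  move/(congr1 (last x)); rewrite last_cat last_rcons last_rcons last_all.
    by move/eqP; rewrite (negPf xm).
  apply/allP=> c; rewrite mem_filter => /andP[/orP[/eqP -> | /eqP cm] cs]; first by rewrite /= eqxx.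
  by rewrite -cm cs in ms.
have H' : teqb (t0 ++ x :: s) (rcons r m) by rewrite -cat_rcons.
have ms' : m \notin x :: s by rewrite inE negb_or eq_sym xm.
have [t'' Ht''] := IH _ _ H' ms'.
exists (rcons t'' x); apply: teqb_trans (teqb_rcons x Ht'') _.
rewrite -!cats1 -!catA /=; apply: trace_teqb; apply: (@te_swap _ _ t'' [::]).
by rewrite Isym.
Qed.

End Traces.

Section AddF.
Local Open Scope ring_scope.
Variables (U V : zmodType) (F : U -> V) (HF : GRing.zmod_morphism F).
Let FA : {additive U -> V} := HB.pack F (GRing.isZmodMorphism.Build _ _ F HF).
Lemma af_sum (J : Type) (r : seq J) (P : pred J) (G : J -> U) :
  F (\sum_(i <- r | P i) G i) = \sum_(i <- r | P i) F (G i).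
Proof. exact: (raddf_sum FA). Qed.
Lemma af_Mz x n : F (x *~ n) = F x *~ n. Proof. exact: (raddfMz FA). Qed.
Lemma af0 : F 0 = 0. Proof. exact: (raddf0 FA). Qed.
Lemma afD x y : F (x + y) = F x + F y. Proof. exact: (raddfD FA). Qed.
Lemma afN x : F (- x) = - F x. Proof. exact: (raddfN FA). Qed.
Lemma afB x y : F (x - y) = F x - F y. Proof. exact: (raddfB FA). Qed.
End AddF.

Section FreegExt.
Local Open Scope ring_scope.
Lemma freeg_ext (K : choiceType) (V : zmodType) (F G : {freeg K / int} -> V) :
  GRing.zmod_morphism F -> GRing.zmod_morphism G ->
  (forall c, F << c >> = G << c >>) -> forall x, F x = G x.
Proof.
move=> HF HG H; elim/freeg_ind_dom0 => [|k x D _ _ IH]; first by rewrite (af0 HF) (af0 HG).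
rewrite (afD HF) (afD HG) IH -[k]intz -freegU_mulz (af_Mz HF) (af_Mz HG) H.
by [].
Qed.

Lemma liftU1 (K : choiceType) (M : lmodType int) (f : K -> M) c : fglift f << c >> = f c.
Proof. by rewrite liftU scale1r. Qed.
End FreegExt.

Section Construction.
Local Open Scope ring_scope.
Variable S : finType.
Variable I : rel S.
Hypothesis Isym : symmetric I.
Hypothesis Iirr : irreflexive I.

Local Notation teqb := (teqb I).
Local Notation nf := (nf I).

Lemma nf_nf u : nf (nf u) == nf u.
Proof. by rewrite nf_idem. Qed.

Definition Tw := {u : seq S | nf u == u}.
Definition tnf (u : seq S) : Tw := exist _ (nf u) (nf_nf u).
Definition clq (A : {set S}) := [forall a in A, forall b in A, (a != b) ==> I a b].
Definition okc (k : nat) (c : Tw * {set S}) := clq c.2 && (#|c.2| == k).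
Definition Cell k := {c : Tw * {set S} | okc k c}.
Definition P k := {freeg (Cell k) / int}.
Definition ct k (c : Cell k) : seq S := val (val c).1.
Definition cA k (c : Cell k) : {set S} := (val c).2.

Definition mkcell k (u : seq S) (A : {set S}) : P k :=
  if @insub _ (okc k) (Cell k) (tnf u, A) is Some c then << c >> else 0.

Lemma tnf_teqb u v : teqb u v -> tnf u = tnf v.
Proof. by move=> H; apply: val_inj; rewrite /= (nf_eq H). Qed.

Lemma mkcell_teqb k u v A : teqb u v -> mkcell k u A = mkcell k v A.
Proof. by move=> H; rewrite /mkcell (tnf_teqb H). Qed.

Lemma ct_nf k (c : Cell k) : nf (ct c) = ct c.
Proof. by apply/eqP; exact: (valP (val c).1). Qed.

Lemma mkcell_ct k (c : Cell k) : mkcell k (ct c) (cA c) = << c >>.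
Proof.
rewrite /mkcell.
have -> : (tnf (ct c), cA c) = val c.
  by case: c => [[t A] h]; congr pair; apply: val_inj; rewrite /= ct_nf.
by rewrite valK.
Qed.

Lemma mkcell_nok k u A : ~~ okc k (tnf u, A) -> mkcell k u A = 0.
Proof. by move=> H; rewrite /mkcell insubN. Qed.

Lemma mkcell_ok k u A : okc k (tnf u, A) ->
  exists c : Cell k, [/\ mkcell k u A = << c >>, ct c = nf u & cA c = A].
Proof.
move=> H; rewrite /mkcell insubT /=; eexists; split; by [].
Qed.

Definition act k (w : seq S) : P k -> P k :=
  fglift (fun c : Cell k => mkcell k (w ++ ct c) (cA c)).

Arguments act : clear implicits.

Lemma act_add k w : GRing.zmod_morphism (act k w).
Proof. exact: lift_is_additive. Qed.

Lemma act_basis k w (c : Cell k) : act k w << c >> = mkcell k (w ++ ct c) (cA c).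
Proof. by rewrite /act liftU1. Qed.

Lemma act_mkcell k w u A : act k w (mkcell k u A) = mkcell k (w ++ u) A.
Proof.
case: (boolP (okc k (tnf u, A))) => H.
  have [c [-> E1 E2]] := mkcell_ok H.
  rewrite act_basis E1 E2; apply: mkcell_teqb; apply: teqb_catl; apply: teqb_sym; exact: nfE.
by rewrite !mkcell_nok // (af0 (@act_add k w)).
Qed.

Lemma act_module k : is_module I (act k).
Proof.
split.
- exact: act_add.
- apply: (freeg_ext (act_add _) (G := id)) => //= c.
  by rewrite act_basis mkcell_ct.
- move=> u v; apply: (freeg_ext (act_add _) (G := fun x => act k u (act k v x))).
    by move=> x y; rewrite (afB (@act_add k v)) (afB (@act_add k u)).
  by move=> c; rewrite !act_basis act_mkcell catA.
- move=> u v x H; apply: (freeg_ext (act_add _) (act_add _)) => c.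
  rewrite !act_basis; apply: mkcell_teqb; apply: teqb_catr.
  exact: trace_teqb Isym Iirr _ _ H.
Qed.

Lemma act_projective k : projective I (act k).
Proof.
move=> A B actA actB g f modA modB [gadd gequ] gsurj [fadd fequ].
have pre : forall b : B, {a : A | g a = b}.
  by move=> b; apply: constructive_indefinite_description; apply: gsurj.
pose pr b := sval (pre b).
have prE : forall b, g (pr b) = b by move=> b; rewrite /pr; case: (pre b).
case: modA => addA idA compA trA.
pose h := fglift (fun c : Cell k => (actA (ct c) (pr (f (mkcell k [::] (cA c)))) : zmodule A)).
have hadd : GRing.zmod_morphism h by apply: lift_is_additive.
have hE : forall c, h << c >> = actA (ct c) (pr (f (mkcell k [::] (cA c)))).
  by move=> c; rewrite /h liftU1.
exists h; split; first split.
- exact: hadd.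
- move=> w; apply: (freeg_ext (G := fun x => actA w (h x))).
  + by move=> x y; rewrite (afB (@act_add k w)) (afB hadd).
  + by move=> x y; rewrite (afB hadd) addA.
  move=> c; rewrite act_basis hE.
  have okc' : okc k (tnf (w ++ ct c), cA c) by case: c => [[t0 A0] hc].
  have [c' [-> E1 E2]] := mkcell_ok okc'.
  rewrite hE E1 E2 -compA; apply: trA; apply: (teqb_trace Isym Iirr).
  apply: teqb_sym; exact: nfE.
- apply: (freeg_ext (F := fun x => g (h x))).
  + by move=> x y; rewrite (afB hadd) gadd.
  + exact: fadd.
  move=> c; rewrite hE gequ prE -fequ act_mkcell cats0 mkcell_ct.
  by [].
Qed.

Definition cnt (A : {set S}) (a : S) := #|[set b in A | (enum_rank b < enum_rank a)%N]|.
Definition sgn (A : {set S}) (a : S) : int := (-1) ^+ cnt A a.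

Definition dd k : P k.+1 -> P k :=
  fglift (fun c : Cell k.+1 => \sum_(a in cA c)
    (mkcell k (rcons (ct c) a) (cA c :\ a) - mkcell k (ct c) (cA c :\ a)) *~ sgn (cA c) a).
Arguments dd : clear implicits.

Definition eps : P 0 -> int := fglift (fun _ : Cell 0 => (1 : int^o)).

Lemma dd_add k : GRing.zmod_morphism (dd k).
Proof. exact: lift_is_additive. Qed.

Lemma eps_add : GRing.zmod_morphism eps.
Proof. move=> x y; exact: (@lift_is_additive _ _ (int^o) (fun _ : Cell 0 => (1 : int^o)) x y). Qed.

Lemma okcE k u A : okc k (tnf u, A) = clq A && (#|A| == k).
Proof. by []. Qed.

Lemma dd_mkcell k u A : okc k.+1 (tnf u, A) -> dd k (mkcell k.+1 u A) =
  \sum_(a in A) (mkcell k (rcons u a) (A :\ a) - mkcell k u (A :\ a)) *~ sgn A a.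
Proof.
move=> H; have [c [-> E1 E2]] := mkcell_ok H; rewrite /dd liftU1 E2.
apply: eq_bigr => a _; rewrite E1.
rewrite (mkcell_teqb _ _ (teqb_sym (nfE I u))).
by rewrite (mkcell_teqb _ _ (teqb_rcons a (teqb_sym (nfE I u)))).
Qed.

Lemma mkcell0 k u A : ~~ okc k (tnf u, A) -> mkcell k u A = 0.
Proof. exact: mkcell_nok. Qed.

Lemma dd_mkcell_gen k u A : dd k (mkcell k.+1 u A) =
  if okc k.+1 (tnf u, A) then
  \sum_(a in A) (mkcell k (rcons u a) (A :\ a) - mkcell k u (A :\ a)) *~ sgn A a
  else 0.
Proof.
case: ifP => H; first exact: dd_mkcell.
by rewrite mkcell0 ?H // (af0 (@dd_add k)).
Qed.

Lemma dd_hom k : is_hom (act k.+1) (act k) (dd k).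
Proof.
split; first exact: dd_add.
move=> w; apply: (freeg_ext (G := fun x => act k w (dd k x))).
- by move=> x y; rewrite (afB (@act_add _ w)) (afB (@dd_add k)).
- by move=> x y; rewrite (afB (@dd_add k)) (afB (@act_add _ w)).
move=> c; rewrite act_basis dd_mkcell; last by case: c => [[t0 A0] hc].
rewrite -mkcell_ct dd_mkcell; last by case: c => [[t0 A0] hc].
rewrite (af_sum (@act_add _ w)); apply: eq_bigr => a _.
by rewrite (af_Mz (@act_add _ w)) (afB (@act_add _ w)) !act_mkcell rcons_cat.
Qed.

Lemma eps_mkcell u A : eps (mkcell 0 u A) = if okc 0 (tnf u, A) then 1 else 0.
Proof.
case: ifP => H; last by rewrite mkcell0 ?H // (af0 eps_add).
by have [c [-> _ _]] := mkcell_ok H; rewrite /eps liftU1.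
Qed.

Lemma eps_basis (c : Cell 0) : eps << c >> = 1.
Proof. by rewrite /eps liftU1. Qed.

Lemma eps_hom : is_hom (act 0) (@triv_act S) eps.
Proof.
split; first exact: eps_add.
move=> w; apply: (freeg_ext (G := eps)).
- by move=> x y; rewrite (afB (@act_add _ w)) (afB eps_add).
- exact: eps_add.
move=> c; rewrite act_basis eps_mkcell eps_basis.
by case: c => [[t0 A0] hc] /=; rewrite /okc /= in hc *; rewrite hc.
Qed.

Lemma clq0 : clq set0.
Proof. by apply/forallP=> a; apply/implyP; rewrite inE. Qed.

Lemma eps_surj z : exists x, eps x = z.
Proof.
exists (mkcell 0 [::] set0 *~ z); rewrite (af_Mz eps_add) eps_mkcell.
by rewrite /okc /= clq0 cards0 /= intz.
Qed.

Lemma clq_sub (A B : {set S}) : clq A -> B \subset A -> clq B.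
Proof.
move=> /forallP HA sBA; apply/forallP => a; apply/implyP => aB.
apply/forallP => b; apply/implyP => bB.
have := HA a; move/implyP/(_ (subsetP sBA _ aB))/forallP/(_ b)/implyP.
by apply; apply: (subsetP sBA).
Qed.

Lemma clqP A a b : clq A -> a \in A -> b \in A -> a != b -> I a b.
Proof.
move=> /forallP/(_ a)/implyP H aA bA; move: (H aA) => /forallP/(_ b)/implyP.
by move=> /(_ bA)/implyP.
Qed.

Lemma okcD1 k u v A a : okc k.+1 (u, A) -> a \in A -> okc k (v, A :\ a).
Proof.
rewrite /okc /= => /andP[cA /eqP sA] aA; apply/andP; split.
  by apply: clq_sub cA _; apply: subsetDl.
by move: (cardsD1 a A); rewrite aA sA add1n => -[<-].
Qed.

Lemma setD1C (A : {set S}) a b : A :\ a :\ b = A :\ b :\ a.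
Proof. by apply/setP=> x; rewrite !in_setD1 andbCA. Qed.

Lemma rank_lt_neq (a b : S) : a != b -> (enum_rank a < enum_rank b)%N || (enum_rank b < enum_rank a)%N.
Proof.
move=> ab; rewrite -neq_ltn; apply: contra ab => /eqP E.
by apply/eqP; apply: enum_rank_inj; apply: val_inj.
Qed.

Lemma cnt_D1_ge (A : {set S}) (a b : S) : ~~ (enum_rank a < enum_rank b)%N -> cnt (A :\ a) b = cnt A b.
Proof.
move=> H; rewrite /cnt; apply: eq_card => x; rewrite !inE.
case: (eqVneq x a) => [->|] //=; by rewrite (negPf H) andbF.
Qed.

Lemma cnt_D1_lt (A : {set S}) (a b : S) : b \in A -> (enum_rank b < enum_rank a)%N -> cnt A a = (cnt (A :\ b) a).+1.
Proof.
move=> bA H; rewrite /cnt (cardsD1 b) inE bA H /= add1n; congr (_.+1); apply: eq_card => x.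
by rewrite !inE andbA.
Qed.

Lemma sgn_anti (A : {set S}) (a b : S) : a \in A -> b \in A -> a != b ->
  sgn A b * sgn (A :\ b) a = - (sgn A a * sgn (A :\ a) b).
Proof.
move=> aA bA ab.
suff H : forall a b, a \in A -> b \in A -> (enum_rank b < enum_rank a)%N ->
    sgn A b * sgn (A :\ b) a = - (sgn A a * sgn (A :\ a) b).
  case/orP: (rank_lt_neq ab) => lt; last exact: H.
  by rewrite (H b a) // opprK.
move=> {ab aA bA a b} a b aA bA lt; rewrite /sgn (cnt_D1_lt bA lt) (@cnt_D1_ge A a b).
  by rewrite exprS mulN1r mulNr opprK mulrC.
by rewrite -leqNgt ltnW.
Qed.

Lemma zm4 (V : zmodType) (p q r u : V) : (p - r) - (q - u) = (p - q) - (r - u).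
Proof. by rewrite !opprB addrCA [RHS]addrCA addrAC. Qed.

Lemma anti_sum (V : zmodType) (A : {set S}) (F : S -> S -> V) :
  (forall a b, a \in A -> b \in A -> a != b -> F b a = - F a b) ->
  let X := \sum_(a in A) \sum_(b in A :\ a) F a b in X + X = 0.
Proof.
move=> HF X.
pose G a b := if (a \in A) && (b \in A :\ a) then F a b else 0.
have EX : X = \sum_a \sum_b G a b.
  rewrite /X big_mkcond; apply: eq_bigr => a _; rewrite big_mkcond /=.
  case: ifP => aA; last by rewrite big1 // => b _; rewrite /G aA.
  by apply: eq_bigr => b _; rewrite /G aA.
have HG : forall a b, G b a = - G a b.
  move=> a b; rewrite /G !in_setD1.
  case: (boolP (a \in A)) => aA; case: (boolP (b \in A)) => bA /=; rewrite ?andbF ?oppr0 //.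
  case: (eqVneq a b) => [->|ab]; first by rewrite ?eqxx ?oppr0.
  by rewrite /= HF.
have : X = - X.
  rewrite {1}EX exchange_big /= EX -sumrN; apply: eq_bigr => b _.
  by rewrite -sumrN; apply: eq_bigr => a _; rewrite HG.
by move=> {1}->; rewrite addNr.
Qed.

Lemma freeg_double k (X : P k) : X + X = 0 -> X = 0.
Proof.
move=> H; apply/eqP/freeg_eqP => z; have := congr1 (coeff z) H.
rewrite coeffD !coeff0; lia.
Qed.

Lemma rcons_swap t a b : I a b -> teqb (rcons (rcons t a) b) (rcons (rcons t b) a).
Proof.
move=> Iab; rewrite -!cats1 -!catA /=; apply: (trace_teqb Isym Iirr).
exact: (@te_swap _ _ t [::]).
Qed.

Lemma dd_dd k x : dd k (dd k.+1 x) = 0.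
Proof.
move: x; apply: (freeg_ext (G := fun _ => 0)).
- by move=> x y; rewrite (afB (@dd_add k.+1)) (afB (@dd_add k)).
- by move=> x y; rewrite subr0.
move=> c; rewrite -mkcell_ct.
have okA : okc k.+2 (tnf (ct c), cA c) by case: c => [[t0 A0] hc].
set t := ct c; set A := cA c; rewrite dd_mkcell //.
have cA : clq A by case/andP: okA.
rewrite (af_sum (@dd_add k)).
pose F a b := ((mkcell k (rcons (rcons t a) b) (A :\ a :\ b) - mkcell k (rcons t a) (A :\ a :\ b))
   - (mkcell k (rcons t b) (A :\ a :\ b) - mkcell k t (A :\ a :\ b))) *~ (sgn A a * sgn (A :\ a) b).
transitivity (\sum_(a in A) \sum_(b in A :\ a) F a b).
  apply: eq_bigr => a aA.
  rewrite (af_Mz (@dd_add k)) (afB (@dd_add k)) !dd_mkcell; try exact: (okcD1 _ okA).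
  rewrite -sumrB mulrz_suml; apply: eq_bigr => b _.
  by rewrite -mulrzBl /F mulrC mulrzA.
apply: freeg_double; apply: anti_sum => a b aA bA ab.
have Iab := clqP cA aA bA ab.
rewrite /F (sgn_anti aA bA ab) mulrNz setD1C; congr (- (_ *~ _)).
rewrite (mkcell_teqb _ _ (rcons_swap t Iab)); exact: zm4.
Qed.

Lemma eps_dd x : eps (dd 0 x) = 0.
Proof.
move: x; apply: (freeg_ext (G := fun _ => 0)).
- by move=> x y; rewrite (afB (@dd_add 0)) (afB eps_add).
- by move=> x y; rewrite subr0.
move=> c; rewrite -mkcell_ct.
have okA : okc 1 (tnf (ct c), cA c) by case: c => [[t0 A0] hc].
rewrite dd_mkcell // (af_sum eps_add) big1 // => a aA.
rewrite (af_Mz eps_add) (afB eps_add) !eps_mkcell.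
by rewrite !(okcD1 _ okA aA) subrr mul0rz.
Qed.

Definition ep k (c : Cell k) := nf (ct c ++ enum (cA c)).
Definition len k (c : Cell k) := (size (ct c) + #|cA c|)%N.
Definition mlast (u : seq S) : option S := [pick a | lastb I u a].
Definition badc k (c : Cell k) := if mlast (ep c) is Some m then m \notin cA c else false.
Definition goodc k (c : Cell k) := if mlast (ep c) is Some m then m \in cA c else false.

Lemma mlast_none u : mlast u = None -> u = [::].
Proof.
rewrite /mlast; case: pickP => // H _; case/lastP: u H => // u a /(_ a).
by rewrite lastb_rcons.
Qed.

Lemma mlast_some u m : mlast u = Some m -> lastb I u m.
Proof. by rewrite /mlast; case: pickP => // x H [<-]. Qed.

Lemma size_ep k (c : Cell k) : size (ep c) = len c.
Proof. by rewrite /ep /len (size_nf Iirr) size_cat cardE. Qed.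

Lemma len_pos k (c : Cell k) : (0 < len c)%N -> badc c || goodc c.
Proof.
rewrite -size_ep /badc /goodc => H; case E: (mlast (ep c)) => [m|]; first by case: (m \in cA c).
by move: H; rewrite (mlast_none E).
Qed.

Lemma cell_clq k (c : Cell k) : clq (cA c).
Proof. case: c => [[t A] h]; rewrite /cA /=; by case/andP: h. Qed.

Lemma cell_card k (c : Cell k) : #|cA c| = k.
Proof. case: c => [[t A] h]; rewrite /cA /=; by case/andP: h => _ /eqP. Qed.

Lemma cell_eq k (c c' : Cell k) : ct c = ct c' -> cA c = cA c' -> c = c'.
Proof.
move: c c' => [[[t p] A] h] [[[t' p'] A'] h']; rewrite /ct /cA /= => E1 E2.
subst; apply: val_inj => /=; congr pair; exact: val_inj.
Qed.

Lemma enum_split u (B : {set S}) x : clq B -> x \in B ->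
  teqb (rcons u x ++ enum (B :\ x)) (u ++ enum B).
Proof.
move=> cB xB; rewrite cat_rcons; apply: teqb_catl; apply: (cliq_teqb Isym).
- by rewrite /= mem_enum !inE eqxx enum_uniq.
- exact: enum_uniq.
- by move=> y; rewrite inE !mem_enum in_setD1; case: (eqVneq y x) => [->|].
move=> p q; rewrite !inE !mem_enum !in_setD1 => hp hq.
have pB : p \in B by case/orP: hp => [/eqP ->|/andP[]].
have qB : q \in B by case/orP: hq => [/eqP ->|/andP[]].
exact: clqP cB pB qB.
Qed.

Lemma coeff_mkcell k (c0 : Cell k) u B : coeff c0 (mkcell k u B) != 0 ->
  ct c0 = nf u /\ cA c0 = B.
Proof.
case: (boolP (okc k (tnf u, B))) => H; last by rewrite mkcell0 // coeff0 eqxx.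
have [c1 [-> E1 E2]] := mkcell_ok H; rewrite coeffU.
by case: (eqVneq c1 c0) => [<-|] //; rewrite mulr0 eqxx.
Qed.

Lemma coeff_mkcell_self k (c : Cell k) u : ct c = nf u -> coeff c (mkcell k u (cA c)) = 1.
Proof.
move=> E; rewrite (mkcell_teqb _ _ (nfE I u)) -E mkcell_ct coeffU eqxx.
by rewrite mulr1.
Qed.

Lemma coeff_dd_nz k (c0 : Cell k) u B : coeff c0 (dd k (mkcell k.+1 u B)) != 0 ->
  exists2 x, x \in B & ((ct c0 = nf (rcons u x) /\ cA c0 = B :\ x) \/
                         (ct c0 = nf u /\ cA c0 = B :\ x)).
Proof.
rewrite dd_mkcell_gen; case: ifP => _; last by rewrite coeff0 eqxx.
move=> Hnz; apply: NNPP => H; move/negP: Hnz; apply; apply/eqP; rewrite (af_sum (coeff_is_additive c0)) big1 // => x xB.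
have h1 : coeff c0 (mkcell k (rcons u x) (B :\ x)) = 0.
  case: (eqVneq (coeff c0 (mkcell k (rcons u x) (B :\ x))) 0) => // /coeff_mkcell h1.
  by case: H; exists x => //; left.
have h2 : coeff c0 (mkcell k u (B :\ x)) = 0.
  case: (eqVneq (coeff c0 (mkcell k u (B :\ x))) 0) => // /coeff_mkcell h2.
  by case: H; exists x => //; right.
rewrite (af_Mz (coeff_is_additive c0)) (afB (coeff_is_additive c0)) h1 h2 subrr.
by rewrite mul0rz.
Qed.

Lemma sgn_sq A a : sgn A a * sgn A a = 1.
Proof. by rewrite /sgn -exprD -signr_odd oddD addbb. Qed.

Lemma sgn_neq0 A a : sgn A a != 0.
Proof. by rewrite /sgn signr_eq0. Qed.

Lemma teqb_clq_cat u (s1 s2 : seq S) : uniq s1 -> uniq s2 -> s1 =i s2 -> cliq I s1 ->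
  teqb (u ++ s1) (u ++ s2).
Proof. by move=> u1 u2 E C; apply: teqb_catl; apply: (cliq_teqb Isym). Qed.

Lemma enum_split_end u (B : {set S}) x : clq B -> x \in B ->
  teqb (rcons (u ++ enum (B :\ x)) x) (u ++ enum B).
Proof.
move=> cB xB; rewrite -cats1 -catA; apply: teqb_clq_cat.
- by rewrite cat_uniq enum_uniq /= mem_enum !inE eqxx.
- exact: enum_uniq.
- move=> y; rewrite mem_cat inE !mem_enum in_setD1; case: (eqVneq y x) => [->|] /=; by rewrite ?xB ?orbF.
move=> p q; rewrite !mem_cat !inE !mem_enum !in_setD1 => hp hq.
have pB : p \in B by case/orP: hp => [/andP[]|/eqP ->].
have qB : q \in B by case/orP: hq => [/andP[]|/eqP ->].
exact: clqP cB pB qB.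
Qed.

Lemma cell_okc k (c : Cell k) : okc k ((val c).1, cA c).
Proof. by case: c => [[t A] h]. Qed.

Lemma ep_eq k (c0 : Cell k) u : teqb (ct c0 ++ enum (cA c0)) u -> ep c0 = nf u.
Proof. exact: nf_eq. Qed.

Lemma size_rcons_nf u x : size (nf (rcons u x)) = (size u).+1.
Proof. by rewrite (size_nf Iirr) size_rcons. Qed.

Lemma elim_step k (c : Cell k) : badc c ->
  exists y : P k.+1, exists s : int, [/\ s * s = 1, coeff c (dd k y) = s &
    forall c0, coeff c0 (dd k y) != 0 ->
      c0 = c \/ (len c0 = len c /\ goodc c0) \/ (len c0 < len c)%N].
Proof.
rewrite /badc; case E: (mlast (ep c)) => [m|] // mA.
set t := ct c; set A := cA c.
have lm' : lastb I (t ++ enum A) m := lastb_teqb (teqb_sym (nfE I _)) (mlast_some E).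
have [r Hr] : exists r, teqb (t ++ enum A) (rcons r m) by apply/lastbP.
have mnA : m \notin enum A by rewrite mem_enum.
have [t' Ht'] := last_cat_lemma Isym Iirr Hr mnA.
have cA := cell_clq c; have sA := cell_card c.
have Ima : forall a, a \in A -> I m a.
  move=> a aA; have am : a != m by apply: contraNneq mA => <-.
  have la : lastb I (ep c) a.
    apply: lastb_teqb (nfE I _) _; apply: lastb_teqb (enum_split_end t cA aA) _.
    exact: lastb_rcons.
  by rewrite Isym; apply: last_comm la (mlast_some E) am.
set B := m |: A.
have cB : clq B.
  apply/forallP=> p; apply/implyP=> pB; apply/forallP=> q; apply/implyP=> qB; apply/implyP.
  move: pB qB; rewrite !in_setU1.
  case: (eqVneq p m) => [->|pm] /= pA; case: (eqVneq q m) => [->|qm] /= qA pq.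
  - by move: pq; rewrite ?eqxx.
  - exact: Ima.
  - by rewrite Isym; apply: Ima.
  - exact: clqP cA pA qA pq.
have sB : #|B| = k.+1 by rewrite cardsU1 mA sA.
have okB : okc k.+1 (tnf t', B) by rewrite /okc /= cB sB eqxx.
have BmA : B :\ m = A by rewrite /B setU1K.
have nft : nf (rcons t' m) = t by rewrite (nf_eq (teqb_sym Ht')) /t ct_nf.
have szt : size t = (size t').+1 by rewrite (teqb_size Iirr Ht') size_rcons.
exists (mkcell k.+1 t' B), (sgn B m); split; first exact: sgn_sq.
  rewrite dd_mkcell // (af_sum (coeff_is_additive c)) (bigD1 m) ?setU11 //=.
  rewrite big1 ?addr0; last first.
    move=> x /andP[xB xm]; rewrite (af_Mz (coeff_is_additive c)) (afB (coeff_is_additive c)).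
    have mBx : m \in B :\ x by rewrite in_setD1 eq_sym xm setU11.
    have h : forall u, coeff c (mkcell k u (B :\ x)) = 0.
      move=> u; apply/eqP; apply: contraT => /coeff_mkcell[_ hA].
      by move: mA; rewrite /A hA mBx.
    by rewrite !h subrr mul0rz.
  rewrite (af_Mz (coeff_is_additive c)) (afB (coeff_is_additive c)) BmA.
  rewrite coeff_mkcell_self ?nft //.
  have -> : coeff c (mkcell k t' A) = 0.
    apply/eqP; apply: contraT => /coeff_mkcell[h _].
    by move: szt; rewrite /t h (size_nf Iirr); lia.
  by rewrite subr0 intz.
move=> c0 /coeff_dd_nz[x xB [[h1 h2]|[h1 h2]]]; last first.
  have cBx : #|B :\ x| = k by have := cardsD1 x B; rewrite xB sB add1n => -[].
  right; right; rewrite /len h1 h2 (size_nf Iirr) cBx szt -/A sA; lia.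
case: (eqVneq x m) => [xm|xm].
  left; apply: cell_eq; first by rewrite h1 -/t xm nft.
  by rewrite h2 xm BmA.
right; left; split.
  have cBx : #|B :\ x| = k by have := cardsD1 x B; rewrite xB sB add1n => -[].
  rewrite /len h1 h2 size_rcons_nf cBx szt -/A sA; lia.
have Ec0 : ep c0 = ep c.
  rewrite /ep; apply: nf_eq; rewrite h1 h2.
  apply: teqb_trans (teqb_catr _ (teqb_sym (nfE I _))) _.
  apply: teqb_trans (enum_split t' cB xB) _.
  apply: teqb_trans (teqb_sym (enum_split t' cB (setU11 m A))) _.
  rewrite BmA; apply: teqb_catr; exact: teqb_sym Ht'.
rewrite /goodc Ec0 E h2 in_setD1 setU11 andbT.
by rewrite eq_sym.
Qed.

Lemma coeff_lin k1 k2 (F : P k1 -> P k2) (HF : GRing.zmod_morphism F) (z : P k1) b :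
  coeff b (F z) = \sum_(c0 <- dom z) coeff b (F << c0 >>) * coeff c0 z.
Proof.
rewrite -{1}(freeg_sumE z) (af_sum HF) (af_sum (coeff_is_additive b)); apply: eq_bigr => c0 _.
have -> : << coeff c0 z *g c0 >> = << c0 >> *~ coeff c0 z by rewrite freegU_mulz intz.
by rewrite (af_Mz HF) (af_Mz (coeff_is_additive b)) mulrzz.
Qed.

Lemma good_step k (z : P k.+1) (L : nat) : dd k z = 0 -> (0 < L)%N ->
  (forall c, coeff c z != 0 -> (len c <= L)%N) ->
  (forall c, coeff c z != 0 -> len c = L -> ~~ badc c) ->
  forall c, coeff c z != 0 -> (len c < L)%N.
Proof.
move=> dz L0 bnd nb c cz; rewrite ltn_neqAle bnd // andbT; apply/negP => /eqP lc.
have gc : goodc c.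
  have := len_pos (c := c); rewrite lc L0 => /(_ isT).
  by rewrite (negPf (nb _ cz lc)).
move: gc; rewrite /goodc; case E: (mlast (ep c)) => [m|] // mA.
have okb : okc k (tnf (rcons (ct c) m), cA c :\ m) by apply: okcD1 (cell_okc c) mA.
have [bc [Ebc Ebt EbA]] := mkcell_ok okb.
have uniqc : forall c0, coeff c0 z != 0 -> coeff bc (dd k << c0 >>) != 0 -> c0 = c.
  move=> c0 c0z; rewrite -mkcell_ct => /coeff_dd_nz[x xA0 [[h1 h2]|[h1 h2]]]; last first.
    exfalso; have := bnd _ c0z; rewrite /len -(size_nf Iirr (ct c0)) -h1 Ebt size_rcons_nf.
    rewrite !cell_card -lc /len cell_card; lia.
  have szc0 : size (ct c) = size (ct c0).
    by have := congr1 size h1; rewrite Ebt !size_rcons_nf => -[].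
  have lc0 : len c0 = L by rewrite -lc /len szc0 !cell_card.
  have gc0 : goodc c0.
    have := len_pos (c := c0); rewrite lc0 L0 => /(_ isT).
    by rewrite (negPf (nb _ c0z lc0)).
  have Ec0 : ep c0 = ep c.
    rewrite /ep; apply: nf_eq.
    apply: teqb_trans (teqb_sym (enum_split (ct c0) (cell_clq c0) xA0)) _.
    apply: teqb_trans (teqb_catr _ (nfE I _)) _.
    rewrite -h1 -h2 Ebt EbA.
    apply: teqb_trans (teqb_catr _ (teqb_sym (nfE I _))) _.
    exact: enum_split (cell_clq c) mA.
  move: gc0; rewrite /goodc Ec0 E => mA0.
  have xm : x = m.
    have : m \notin cA c0 :\ x by rewrite -h2 EbA in_setD1 eqxx.
    by rewrite in_setD1 mA0 andbT negbK => /eqP.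
  apply: cell_eq.
    rewrite -(ct_nf c0) -(ct_nf c); apply: nf_eq.
    apply: (teqb_rcons_inj (a := m)); apply: nf_teqb.
    by rewrite -xm -h1 Ebt xm.
  by rewrite -(setD1K xA0) -h2 EbA xm setD1K.
have coefc : coeff bc (dd k << c >>) = sgn (cA c) m.
  rewrite -mkcell_ct dd_mkcell; last exact: cell_okc.
  rewrite (af_sum (coeff_is_additive bc)) (bigD1 m) //=.
  rewrite big1 ?addr0; last first.
    move=> x /andP[xA xm]; rewrite (af_Mz (coeff_is_additive bc)) (afB (coeff_is_additive bc)).
    have mAx : m \in cA c :\ x by rewrite in_setD1 eq_sym xm mA.
    have h : forall u, coeff bc (mkcell k u (cA c :\ x)) = 0.
      move=> u; apply/eqP; apply: contraT => /coeff_mkcell[_ hA].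
      by move: mAx; rewrite -hA EbA in_setD1 eqxx.
    by rewrite !h subrr mul0rz.
  rewrite (af_Mz (coeff_is_additive bc)) (afB (coeff_is_additive bc)) -EbA.
  rewrite coeff_mkcell_self // EbA.
  have -> : coeff bc (mkcell k (ct c) (cA c :\ m)) = 0.
    apply/eqP; apply: contraT => /coeff_mkcell[h _].
    by move: (congr1 size h); rewrite Ebt size_rcons_nf (size_nf Iirr); lia.
  by rewrite subr0 intz.
have : coeff bc (dd k z) = sgn (cA c) m * coeff c z.
  rewrite (coeff_lin (@dd_add k)) (bigD1_seq c) ?uniq_dom ?mem_dom //= coefc.
  rewrite big_seq_cond big1 ?addr0 // => c0 /andP[c0d c0c].
  case: (eqVneq (coeff bc (dd k << c0 >>)) 0) => [->|nz]; first by rewrite mul0r.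
  have c0z : coeff c0 z != 0 by rewrite -mem_dom.
  by rewrite (uniqc c0 c0z nz) eqxx in c0c.
rewrite dz coeff0 => /esym/eqP; rewrite mulf_eq0 (negPf (sgn_neq0 _ _)) /=.
by rewrite (negPf cz).
Qed.

Definition bnd k L (z : P k) := forall c : Cell k, coeff c z != 0 -> (len c <= L)%N.
Definition nbad k L (z : P k) := count (fun c : Cell k => badc c && (len c == L)) (dom z).

Lemma bad_good k (c : Cell k) : badc c -> goodc c -> False.
Proof. by rewrite /badc /goodc; case: (mlast (ep c)) => // m /negPf ->. Qed.

Lemma main_elim k (Q : P k -> Prop) :
  (forall z y, Q z -> Q (z - dd k y)) ->
  (forall z L, Q z -> (0 < L)%N -> bnd L z ->
     (forall c, coeff c z != 0 -> len c = L -> ~~ badc c) -> bnd L.-1 z) ->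
  forall z, Q z -> exists y, bnd 0 (z - dd k y).
Proof.
move=> HQ Hg.
suff H : forall L N z, Q z -> bnd L z -> (nbad L z <= N)%N -> exists y, bnd 0 (z - dd k y).
  move=> z Qz; apply: (H (\max_(c <- dom z) len c) (size (dom z))) => //.
  - by move=> c cz; rewrite -mem_dom in cz; apply: (leq_bigmax_seq _ cz).
  - exact: count_size.
elim=> [|L IHL] N z Qz bz nbz.
  by exists 0; rewrite (af0 (@dd_add k)) subr0.
elim: N z Qz bz nbz => [|N IHN] z Qz bz nbz.
  have nb : forall c, coeff c z != 0 -> len c = L.+1 -> ~~ badc c.
    move=> c cz lc; apply/negP => bc.
    have : has (fun c => badc c && (len c == L.+1)) (dom z).
      by apply/hasP; exists c; [rewrite mem_dom | rewrite bc lc eqxx].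
    by rewrite has_count; move: nbz; rewrite /nbad leqn0 => /eqP ->.
  have bz' := Hg z L.+1 Qz isT bz nb.
  exact: IHL _ z Qz bz' (count_size _ _).
case: (leqP (nbad L.+1 z) N) => [le|gt]; first exact: IHN.
have : has (fun c => badc c && (len c == L.+1)) (dom z).
  by rewrite has_count; apply: leq_ltn_trans gt.
case/hasP => c cd /andP[bc /eqP lc].
have [y0 [s [ss cs Hy]]] := elim_step bc.
pose kap := coeff c z * s.
pose z' := z - dd k (y0 *~ kap).
have Ez' : forall c0, coeff c0 z' = coeff c0 z - coeff c0 (dd k y0) * kap.
  move=> c0; rewrite /z' (afB (coeff_is_additive c0)) (af_Mz (@dd_add k)).
  by rewrite (af_Mz (coeff_is_additive c0)) mulrzz.
have Qz' : Q z' by apply: HQ.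
have cz' : coeff c z' = 0 by rewrite Ez' cs /kap mulrCA ss mulr1 subrr.
have bz' : bnd L.+1 z'.
  move=> c0; rewrite Ez'; case: (eqVneq (coeff c0 (dd k y0)) 0) => [->|nz].
    by rewrite mul0r subr0; apply: bz.
  move=> _; case: (Hy c0 nz) => [->|[[-> _]|lt]]; rewrite ?lc //.
  by rewrite -lc ltnW.
have nbz' : (nbad L.+1 z' <= N)%N.
  rewrite /nbad -!size_filter.
  set f := (fun c : Cell k => badc c && (len c == L.+1)).
  have cf : c \in filter f (dom z) by rewrite mem_filter /f bc lc eqxx cd.
  apply: (@leq_trans (size (rem c (filter f (dom z))))); last first.
    by rewrite size_rem // size_filter; move: nbz; rewrite /nbad -/f; case: (count f _).
  apply: uniq_leq_size; first by rewrite filter_uniq ?uniq_dom.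
  move=> c0; rewrite mem_filter mem_rem_uniq ?filter_uniq ?uniq_dom // => /andP[/andP[bc0 lc0] c0d].
  rewrite inE mem_filter /f bc0 lc0 /=.
  have c0z' : coeff c0 z' != 0 by rewrite -mem_dom.
  have c0c : c0 != c by apply: contraNneq c0z' => ->; rewrite cz'.
  rewrite c0c /= mem_dom; apply: contraNT c0z' => /negPn/eqP c0z.
  rewrite Ez' c0z sub0r oppr_eq0 mulf_eq0; apply/orP; left.
  apply: contraT => nz; case: (Hy c0 nz) => [E|[[_ g]|lt]].
  - by rewrite E eqxx in c0c.
  - by case: (bad_good bc0 g).
  - by move: lt; rewrite lc (eqP lc0) ltnn.
have [y' Hy'] := IHN z' Qz' bz' nbz'.
exists (y0 *~ kap + y'); move: Hy'.
by rewrite /z' (afD (@dd_add k)) opprD addrA.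
Qed.

Lemma exactS k (z : P k.+1) : dd k z = 0 -> exists y : P k.+2, dd k.+1 y = z.
Proof.
move=> dz.
have [|w L Qw L0 bw nb c cz|y Hy] := main_elim (Q := fun w : P k.+1 => dd k w = 0) _ _ dz.
- by move=> w y Qw; rewrite (afB (@dd_add k)) Qw dd_dd subrr.
- by move/(good_step Qw L0 bw nb): cz; rewrite -{1}(prednK L0).
exists y; apply/eqP; rewrite eq_sym -subr_eq0; apply/eqP/eqP/freeg_eqP => c.
rewrite coeff0; apply/eqP; apply: contraT => /Hy; rewrite /len cell_card; lia.
Qed.

Lemma nf_nil : nf [::] = [::].
Proof. by apply/eqP; rewrite -size_eq0 (size_nf Iirr). Qed.

Lemma exact0 (z : P 0) : eps z = 0 -> exists y : P 1, dd 0 y = z.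
Proof.
move=> ez.
have [|w L Qw L0 bw nb c cz|y Hy] := main_elim (Q := fun w : P 0 => eps w = 0) _ _ ez.
- by move=> w y Qw; rewrite (afB eps_add) Qw eps_dd subrr.
- have := bw c cz; rewrite leq_eqVlt => /orP[/eqP lc|]; last by rewrite -{1}(prednK L0).
  exfalso; have := len_pos (c := c); rewrite lc L0 => /(_ isT).
  rewrite (negPf (nb _ cz lc)) /= => g.
  move: g; rewrite /goodc; case: (mlast (ep c)) => // m.
  by rewrite (cards0_eq (cell_card c)) inE.
have okb : okc 0 (tnf [::], set0) by rewrite /okc /= clq0 cards0.
have [b0 [Eb0 Eb0t Eb0A]] := mkcell_ok okb.
set w := z - dd 0 y.
have ew : eps w = 0 by rewrite /w (afB eps_add) ez eps_dd subrr.
have onlyb : forall c, coeff c w != 0 -> c = b0.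
  move=> c /Hy; rewrite /len leqn0 addn_eq0 => /andP[/eqP s0 /eqP c0].
  apply: cell_eq; first by rewrite Eb0t nf_nil; apply/eqP; rewrite -size_eq0 s0.
  by rewrite Eb0A; apply: cards0_eq.
have Ew : w = << b0 >> *~ coeff b0 w.
  apply/eqP/freeg_eqP => c; rewrite (af_Mz (coeff_is_additive c)) coeffU mul1r.
  case: (eqVneq b0 c) => [->|ne]; first by rewrite intz.
  rewrite mul0rz; apply/eqP; apply: contraT => /onlyb E.
  by rewrite E eqxx in ne.
have cb0 : coeff b0 w = 0.
  by move: ew; rewrite {1}Ew (af_Mz eps_add) eps_basis intz.
exists y; apply/eqP; rewrite eq_sym -subr_eq0; apply/eqP.
by rewrite -/w Ew cb0 mulr0z.
Qed.

Lemma P_empty n j : (forall C : {set S}, {in C &, forall a b, a != b -> I a b} -> (#|C| <= n)%N) ->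
  (n < j)%N -> forall y : P j, y = 0.
Proof.
move=> Hcl nj y; apply/eqP/freeg_eqP => c; exfalso.
have := Hcl (cA c) (fun a b aA bA ab => clqP (cell_clq c) aA bA ab).
by rewrite cell_card; lia.
Qed.

End Construction.

Unset Implicit Arguments.
Theorem corollary2p4 (S : finType) (I : rel S)
  (Isym : symmetric I) (Iirr : irreflexive I) (n : nat) (hn : (1 <= n)%N) :
  (forall C : {set S}, {in C &, forall a b, a != b -> I a b} -> (#|C| <= n)%N) ->
  hom_dim_le I n.
Proof.
move=> Hcl.
exists (fun k => (@P S I k : zmodType)), (@act S I), (@dd S I), (@eps S I).
split.
- by move=> i _; split; [exact: act_module | exact: act_projective].
- by move=> i _; exact: dd_hom.
- by split; [exact: eps_hom | exact: eps_surj].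
- split.
  + move=> _ x; split; first exact: exact0.
    by case=> y <-; exact: eps_dd.
  + move=> i _ x; split; first exact: exactS.
    by case=> y <-; exact: dd_dd.
- split.
  + by move=> x n0; rewrite n0 in hn.
  + move=> i ei x dx; have [y Ey] := exactS Isym Iirr dx.
    rewrite -Ey (P_empty Hcl (j := i.+2) _ y) ?ei //.
    apply: af0; exact: dd_add.
Qed.
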